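(* Let $F_1,F_2\colon\mathbf{A}\to\mathbf{B}$ be lenses, and let $E\colon\mathbf{B}\to\mathbf{C}$ be a lens with $E\circ F_1=E\circ F_2$ such that the get functor $UE$ is a coequaliser of $UF_1$ and $UF_2$ in $\mathbf{Cat}$. Then $E$ is a coequaliser of $F_1$ and $F_2$ in $\mathbf{Lens}$ if and only if for all lenses $G\colon\mathbf{B}\to\mathbf{D}$ with $G\circ F_1=G\circ F_2$, all objects $B$ of $\mathbf{B}$ and all morphisms $d$ of $\mathbf{D}$ with domain $GB$, we have $\varphi_{G,B}(d)=\varphi_{E,B}\big(E\,\varphi_{G,B}(d)\big)$.
   Context: A lens $F\colon \mathbf{A}\to\mathbf{B}$ between small categories consists of a functor $F\colon\mathbf{A}\to\mathbf{B}$ (the get functor) together with, for each object $A$ of $\mathbf{A}$, a function $\varphi_{F,A}$ from the set of morphisms of $\mathbf{B}$ with domain $FA$ to the set of morphisms of $\mathbf{A}$ with domain $A$, such that: $F(\varphi_{F,A}b)=b$; $\varphi_{F,A}(\mathrm{id}_{FA})=\mathrm{id}_A$; and $\varphi_{F,A}(b'\circ b)=\varphi_{F,A'}(b')\circ\varphi_{F,A}(b)$ whenever $b$ has domain $FA$, $A'$ is the codomain of $\varphi_{F,A}b$, and $b'$ has domain $FA'$. $\mathbf{Lens}$ is the category of small categories and lenses, with composite of $F\colon\mathbf{A}\to\mathbf{B}$, $G\colon\mathbf{B}\to\mathbf{C}$ having get functor $G\circ F$ and puts $\varphi_{G\circ F,A}(c)=\varphi_{F,A}(\varphi_{G,FA}(c))$.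 $U\colon\mathbf{Lens}\to\mathbf{Cat}$ sends a lens to its get functor. *)

(* Defs.v *)
(* Small categories are presented
   in the "arrow-only" style: a type of objects, a type of morphisms, domain,
   codomain, identities and a (total) composition operation that is only
   constrained on composable pairs. *)

Record Category := {
  Ob : Type;
  Mor : Type;
  dom : Mor -> Ob;
  cod : Mor -> Ob;
  idm : Ob -> Mor;
  comp : Mor -> Mor -> Mor;  (* comp g f = g o f, meaningful when cod f = dom g *)
  dom_idm : forall x, dom (idm x) = x;
  cod_idm : forall x, cod (idm x) = x;
  dom_comp : forall f g, cod f = dom g -> dom (comp g f) = dom f;
  cod_comp : forall f g, cod f = dom g -> cod (comp g f) = cod g;
  comp_id_l : forall f, comp (idm (cod f)) f = f;
  comp_id_r : forall f, comp f (idm (dom f)) = f;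
  comp_assoc : forall f g h, cod f = dom g -> cod g = dom h ->
    comp h (comp g f) = comp (comp h g) f
}.

Arguments dom {c} _.
Arguments cod {c} _.
Arguments idm {c} _.
Arguments comp {c} _ _.

Record Functor (A B : Category) := {
  fo : Ob A -> Ob B;
  fm : Mor A -> Mor B;
  fm_dom : forall f, dom (fm f) = fo (dom f);
  fm_cod : forall f, cod (fm f) = fo (cod f);
  fm_id : forall x, fm (idm x) = idm (fo x);
  fm_comp : forall f g, cod f = dom g -> fm (comp g f) = comp (fm g) (fm f)
}.

Arguments fo {A B} _ _.
Arguments fm {A B} _ _.

Definition functor_eq {A B : Category} (F G : Functor A B) : Prop :=
  (forall x, fo F x = fo G x) /\ (forall f, fm F f = fm G f).

Definition functor_comp {A B C : Category} (F : Functor A B) (G : Functor B C)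
  : Functor A C.
Proof.
  refine {| fo := fun x => fo G (fo F x); fm := fun f => fm G (fm F f) |}.
  - intro f. rewrite fm_dom, fm_dom. reflexivity.
  - intro f. rewrite fm_cod, fm_cod. reflexivity.
  - intro x. rewrite fm_id, fm_id. reflexivity.
  - intros f g H. rewrite fm_comp by exact H. apply fm_comp.
    rewrite fm_cod, fm_dom, H. reflexivity.
Defined.

(* A lens F : A -> B: a get functor together with put functions
   phi_{F,a} : {morphisms of B with domain F a} -> {morphisms of A with domain a}.
   lput a b is only constrained when dom b = F a. *)
Record Lens (A B : Category) := {
  lget : Functor A B;
  lput : Ob A -> Mor B -> Mor A;
  lput_dom : forall a b, dom b = fo lget a -> dom (lput a b) = a;
  lput_lift : forall a b, dom b = fo lget a -> fm lget (lput a b) = b;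
  lput_id : forall a, lput a (idm (fo lget a)) = idm a;
  lput_comp : forall a b b', dom b = fo lget a ->
    dom b' = fo lget (cod (lput a b)) ->
    lput a (comp b' b) = comp (lput (cod (lput a b)) b') (lput a b)
}.

Arguments lget {A B} _.
Arguments lput {A B} _ _ _.

Definition lens_eq {A B : Category} (F G : Lens A B) : Prop :=
  functor_eq (lget F) (lget G) /\
  (forall a b, dom b = fo (lget F) a -> lput F a b = lput G a b).

Definition lens_comp {A B C : Category} (F : Lens A B) (G : Lens B C) : Lens A C.
Proof.
  refine {| lget := functor_comp (lget F) (lget G);
            lput := fun a c => lput F a (lput G (fo (lget F) a) c) |}.
  - simpl. intros a c H. apply lput_dom, lput_dom, H.
  - simpl. intros a c H. rewrite lput_lift by (apply lput_dom, H).
    apply lput_lift, H.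
  - simpl. intro a. rewrite lput_id. apply lput_id.
  - simpl. intros a c c' Hc Hc'. simpl in Hc, Hc'.
    set (x := lput G (fo (lget F) a) c).
    assert (Hx : dom x = fo (lget F) a) by (apply lput_dom, Hc).
    assert (HA : fo (lget F) (cod (lput F a x)) = cod x).
    { rewrite <- fm_cod. rewrite lput_lift by exact Hx. reflexivity. }
    fold x in Hc'. rewrite HA in Hc' |- *.
    rewrite (lput_comp _ _ G) by (exact Hc || exact Hc').
    fold x.
    apply lput_comp; [exact Hx|].
    rewrite HA. apply lput_dom, Hc'.
Defined.

Definition is_coequaliser_Cat {A B C : Category} (F1 F2 : Functor A B)
  (E : Functor B C) : Prop :=
  functor_eq (functor_comp F1 E) (functor_comp F2 E) /\
  forall (D : Category) (G : Functor B D),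
    functor_eq (functor_comp F1 G) (functor_comp F2 G) ->
    exists H : Functor C D,
      functor_eq (functor_comp E H) G /\
      forall H' : Functor C D, functor_eq (functor_comp E H') G -> functor_eq H' H.

Definition is_coequaliser_Lens {A B C : Category} (F1 F2 : Lens A B)
  (E : Lens B C) : Prop :=
  lens_eq (lens_comp F1 E) (lens_comp F2 E) /\
  forall (D : Category) (G : Lens B D),
    lens_eq (lens_comp F1 G) (lens_comp F2 G) ->
    exists H : Lens C D,
      lens_eq (lens_comp E H) G /\
      forall H' : Lens C D, lens_eq (lens_comp E H') G -> lens_eq H' H.

(* Main.v *)
Require Import Defs.
From Stdlib Require Import PropExtensionality ClassicalEpsilon.

Definition IndP : Category.
Proof.
  refine {| Ob := Prop; Mor := (Prop * Prop)%type; dom := fst; cod := snd;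
            idm := fun x => (x, x); comp := fun g f => (fst f, snd g) |};
  intros; repeat match goal with p : (_ * _)%type |- _ => destruct p end;
  simpl in *; subst; reflexivity.
Defined.

Definition indF (X : Category) (p : Ob X -> Prop) : Functor X IndP.
Proof.
  refine (Build_Functor X IndP p (fun f => (p (dom f), p (cod f)) : Mor IndP) _ _ _ _).
  - reflexivity.
  - reflexivity.
  - intro x. simpl. rewrite dom_idm, cod_idm. reflexivity.
  - intros f g H. simpl. rewrite dom_comp, cod_comp by exact H. reflexivity.
Defined.

Lemma indF_coeq {A B : Category} (F1 F2 : Functor A B) (g : Ob B -> Prop) :
  (forall a, g (fo F1 a) = g (fo F2 a)) ->
  functor_eq (functor_comp F1 (indF B g)) (functor_comp F2 (indF B g)).
Proof.
  intro Hg. split; intros; simpl.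
  - apply Hg.
  - rewrite !fm_dom, !fm_cod, !Hg. reflexivity.
Qed.

Lemma indF_comp {B C : Category} (E : Functor B C) (p : Ob C -> Prop) :
  functor_eq (functor_comp E (indF C p)) (indF B (fun b => p (fo E b))).
Proof.
  split; intros; simpl. reflexivity. rewrite fm_dom, fm_cod. reflexivity.
Qed.

Lemma coeq_fo_unique {A B C : Category} (F1 F2 : Functor A B) (E : Functor B C) :
  is_coequaliser_Cat F1 F2 E ->
  forall p q : Ob C -> Prop, (forall b, p (fo E b) = q (fo E b)) -> forall c, p c = q c.
Proof.
  intros [[Hfo _] Hu] p q Hpq c.
  destruct (Hu IndP (indF B (fun b => p (fo E b)))) as [H [_ Huniq]].
  { apply indF_coeq. intro a. exact (f_equal p (Hfo a)). }
  destruct (Huniq (indF C p) (indF_comp E p)) as [Hp _].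
  destruct (Huniq (indF C q)) as [Hq _].
  { split; intros; simpl.
    - symmetry; apply Hpq.
    - rewrite fm_dom, fm_cod, !Hpq. reflexivity. }
  simpl in Hp, Hq. rewrite Hp, Hq. reflexivity.
Qed.

Lemma coeq_surj {A B C : Category} (F1 F2 : Functor A B) (E : Functor B C) :
  is_coequaliser_Cat F1 F2 E -> forall c, exists b, fo E b = c.
Proof.
  intros HE c.
  assert (Hc := coeq_fo_unique F1 F2 E HE (fun _ => True) (fun c => exists b, fo E b = c)).
  pose proof (Hc ltac:(intro b; apply propositional_extensionality; split; eauto) c) as e.
  simpl in e. rewrite <- e. exact I.
Qed.

Lemma coeq_quot {A B C : Category} (F1 F2 : Functor A B) (E : Functor B C)
  (R : Ob B -> Ob B -> Prop) :
  is_coequaliser_Cat F1 F2 E ->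
  (forall b, R b b) -> (forall x y, R x y -> R y x) ->
  (forall x y z, R x y -> R y z -> R x z) ->
  (forall a, R (fo F1 a) (fo F2 a)) ->
  forall b1 b2, fo E b1 = fo E b2 -> R b1 b2.
Proof.
  intros [_ Hu] Rr Rs Rt Rg b1 b2 Heq.
  destruct (Hu IndP (indF B (fun b => R b b2))) as [H [[Hfo _] _]].
  { apply indF_coeq. intro a. apply propositional_extensionality.
    specialize (Rg a). split; eauto. }
  pose proof (Hfo b1) as H1. pose proof (Hfo b2) as H2. simpl in H1, H2.
  rewrite <- H1, Heq, H2. apply Rr.
Qed.

Section Main.
Context (A B C : Category) (F1 F2 : Lens A B) (E : Lens B C).
Context (HEE : lens_eq (lens_comp F1 E) (lens_comp F2 E)).
Context (HC : is_coequaliser_Cat (lget F1) (lget F2) (lget E)).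
Context (D : Category) (G : Lens B D) (HG : lens_eq (lens_comp F1 G) (lens_comp F2 G)).

Definition Rel (b1 b2 : Ob B) : Prop :=
  fo (lget G) b1 = fo (lget G) b2 /\
  forall d, dom d = fo (lget G) b1 ->
    fm (lget E) (lput G b1 d) = fm (lget E) (lput G b2 d).

Lemma Rel_all : forall b1 b2, fo (lget E) b1 = fo (lget E) b2 -> Rel b1 b2.
Proof.
  apply (coeq_quot (lget F1) (lget F2) (lget E) Rel HC).
  - intro b. split; reflexivity.
  - intros x y [e h]. split; [now symmetry|]. intros d Hd. symmetry. apply h. congruence.
  - intros x y z [e1 h1] [e2 h2]. split; [congruence|]. intros d Hd.
    rewrite h1 by exact Hd. apply h2. congruence.
  - intro a. destruct HG as [[Hfo _] Hput]. destruct HEE as [[_ Hfm] _].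
    split; [exact (Hfo a)|]. intros d Hd.
    assert (Hd2 : dom d = fo (lget G) (fo (lget F2) a)) by (rewrite Hd; exact (Hfo a)).
    specialize (Hput a d Hd). simpl in Hput.
    rewrite <- (lput_lift _ _ F1 a (lput G (fo (lget F1) a) d)) by (apply lput_dom; exact Hd).
    rewrite <- (lput_lift _ _ F2 a (lput G (fo (lget F2) a) d)) by (apply lput_dom; exact Hd2).
    rewrite Hput. exact (Hfm _).
Qed.

Definition sec (c : Ob C) : Ob B :=
  proj1_sig (constructive_indefinite_description _ (coeq_surj _ _ _ HC c)).
Lemma sec_spec c : fo (lget E) (sec c) = c.
Proof. unfold sec. destruct constructive_indefinite_description; assumption. Qed.

Context (H0 : Functor C D) (HH0 : functor_eq (functor_comp (lget E) H0) (lget G)).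

Lemma H0fo c : fo H0 c = fo (lget G) (sec c).
Proof. rewrite <- (sec_spec c) at 1. exact (proj1 HH0 (sec c)). Qed.

Definition Hlens : Lens C D.
Proof.
  refine {| lget := H0; lput := fun c d => fm (lget E) (lput G (sec c) d) |}.
  - intros c d Hd. rewrite fm_dom, lput_dom. apply sec_spec. rewrite Hd. apply H0fo.
  - intros c d Hd. rewrite H0fo in Hd. exact (eq_trans (proj2 HH0 _) (lput_lift _ _ G _ _ Hd)).
  - intros c. rewrite H0fo, lput_id, fm_id, sec_spec. reflexivity.
  - intros c d d' Hd Hd'. rewrite H0fo in Hd.
    set (b := sec c) in *.
    simpl in Hd' |- *. fold b in Hd' |- *.
    rewrite (fm_cod _ _ (lget E) (lput G b d)) in Hd' |- *.
    assert (Hd'' : dom d' = fo (lget G) (cod (lput G b d))).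
    { rewrite Hd'. exact (proj1 HH0 _). }
    rewrite (lput_comp _ _ G) by assumption.
    rewrite fm_comp by (symmetry; apply lput_dom; exact Hd'').
    f_equal. destruct (Rel_all (sec (fo (lget E) (cod (lput G b d)))) (cod (lput G b d))) as [e h].
    + apply sec_spec.
    + symmetry. apply h. rewrite <- e in Hd''. exact Hd''.
Defined.
End Main.

Theorem theorem4p5 (A B C : Category) (F1 F2 : Lens A B) (E : Lens B C) :
  lens_eq (lens_comp F1 E) (lens_comp F2 E) ->
  is_coequaliser_Cat (lget F1) (lget F2) (lget E) ->
  (is_coequaliser_Lens F1 F2 E <->
   forall (D : Category) (G : Lens B D),
     lens_eq (lens_comp F1 G) (lens_comp F2 G) ->
     forall (b : Ob B) (d : Mor D),
       dom d = fo (lget G) b ->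
       lput G b d = lput E b (fm (lget E) (lput G b d))).
Proof.
  intros HEE HC. split.
  - intros [_ Hu] D G HG b d Hd.
    destruct (Hu D G HG) as [H [[[Hfo _] Hput] _]].
    assert (Hd' : dom d = fo (lget H) (fo (lget E) b)) by (rewrite Hd; symmetry; exact (Hfo b)).
    specialize (Hput b d Hd'). simpl in Hput. rewrite <- Hput.
    rewrite lput_lift. reflexivity. apply lput_dom. exact Hd'.
  - intros Hcond. split; [exact HEE|]. intros D G HG.
    destruct (proj2 HC D (lget G) (proj1 HG)) as [H0 [HH0 Huniq]].
    exists (Hlens A B C F1 F2 E HEE HC D G HG H0 HH0). split.
    + split; [exact HH0|]. intros b d Hd. simpl in Hd |- *.
      assert (Hd2 : dom d = fo (lget G) b) by (rewrite Hd; exact (proj1 HH0 b)).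
      destruct (Rel_all A B C F1 F2 E HEE HC D G HG (sec A B C F1 F2 E HC (fo (lget E) b)) b)
        as [e h].
      { apply sec_spec. }
      rewrite h by (rewrite e; exact Hd2).
      symmetry. apply Hcond; assumption.
    + intros H' [HgH' HpH']. split; [exact (Huniq _ HgH')|].
      intros c d Hd. simpl.
      set (b := sec A B C F1 F2 E HC c).
      assert (Hb : fo (lget E) b = c) by apply sec_spec.
      rewrite <- Hb in Hd |- *.
      specialize (HpH' b d Hd). simpl in HpH'.
      rewrite <- HpH'. rewrite lput_lift. reflexivity. apply lput_dom. exact Hd.
Qed.
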